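(* The function $$\mathcal{L}(\boldsymbol{U},\boldsymbol{V})=\frac1n\sum_{i=1}^n\big(\langle\boldsymbol{P}_i,\boldsymbol{U}\boldsymbol{U}^\top-\boldsymbol{V}\boldsymbol{V}^\top\rangle-y_i^*\big)^2+\frac\lambda2\,\mathrm{tr}(\boldsymbol{U}\boldsymbol{U}^\top+\boldsymbol{V}\boldsymbol{V}^\top),\qquad \boldsymbol{U},\boldsymbol{V}\in\mathbb{R}^{d\times d},$$ satisfies: (1) all local minima of $\mathcal{L}$ are global minima; (2) at any saddle point $(\boldsymbol{U}_s,\boldsymbol{V}_s)$ of $\mathcal{L}$ there is a direction $(\boldsymbol{\mathcal{E}}_{\boldsymbol{U}},\boldsymbol{\mathcal{E}}_{\boldsymbol{V}})$ with $\mathrm{vec}(\boldsymbol{\mathcal{E}}_{\boldsymbol{U}},\boldsymbol{\mathcal{E}}_{\boldsymbol{V}})^\top\nabla^2\mathcal{L}(\boldsymbol{U}_s,\boldsymbol{V}_s)\,\mathrm{vec}(\boldsymbol{\mathcal{E}}_{\boldsymbol{U}},\boldsymbol{\mathcal{E}}_{\boldsymbol{V}})<0$.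
   Context: $\lambda>0$. Observed index pairs $(i_k,j_k)\in[d]\times[d]$, $k\in[n]$, with $\boldsymbol{P}_k:=\frac12(\boldsymbol{e}_{i_k}\boldsymbol{e}_{j_k}^\top+\boldsymbol{e}_{j_k}\boldsymbol{e}_{i_k}^\top)$, and targets $y_k^*\in\mathbb{R}$ (the observed entries of a symmetric matrix). A saddle point is a stationary point that is not a local extremum. *)

(* Defs.v *)
From HB Require Import structures.
From mathcomp Require Import all_boot all_order all_algebra.
From mathcomp Require Import all_classical all_reals all_analysis.
Set Implicit Arguments. Unset Strict Implicit. Unset Printing Implicit Defensive.
Import Order.TTheory GRing.Theory Num.Theory.
Import numFieldNormedType.Exports.
Local Open Scope ring_scope.
Local Open Scope classical_set_scope.

Definition local_min {R : realType} {V : normedModType R} (f : V -> R) (x : V) :=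
  \forall y \near x, f x <= f y.
Definition local_max {R : realType} {V : normedModType R} (f : V -> R) (x : V) :=
  \forall y \near x, f y <= f x.
Definition global_min {R : realType} {V : normedModType R} (f : V -> R) (x : V) :=
  forall y, f x <= f y.
Definition stationary {R : realType} {V : normedModType R} (f : V -> R) (x : V) :=
  differentiable f x /\ 'd f x = (0 : V -> R).
Definition saddle {R : realType} {V : normedModType R} (f : V -> R) (x : V) :=
  stationary f x /\ ~ local_min f x /\ ~ local_max f x.
(* Hessian quadratic form  e^T (Hess f)(x) e  = second directional derivative *)
Definition hess_form {R : realType} {V : normedModType R} (f : V -> R) (x e : V) : R :=
  'D_e ('D_e f) x.

Definition Pmat {R : realType} {d : nat} (ij : 'I_d * 'I_d) : 'M[R]_d :=
  2^-1 *: (delta_mx ij.1 ij.2 + delta_mx ij.2 ij.1).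
Definition frob {R : realType} {d : nat} (A B : 'M[R]_d) : R := \tr (A^T *m B).

Definition lossL {R : realType} (d n : nat) (idx : 'I_n -> 'I_d * 'I_d)
  (y : 'I_n -> R) (lambda : R) (UV : 'M[R]_d * 'M[R]_d) : R :=
  let U := UV.1 in let V := UV.2 in
  n%:R^-1 * (\sum_(k < n) (frob (Pmat (idx k)) (U *m U^T - V *m V^T) - y k) ^+ 2)
  + lambda / 2 * \tr (U *m U^T + V *m V^T).

(* Main.v *)
Require Import Defs.
From HB Require Import structures.
From mathcomp Require Import all_boot all_order all_algebra.
From mathcomp Require Import all_classical all_reals all_analysis.
From mathcomp Require Import ring lra.
Import Order.TTheory GRing.Theory Num.Theory.
Import numFieldNormedType.Exports.
Local Open Scope ring_scope.
Local Open Scope classical_set_scope.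
Set Implicit Arguments. Unset Strict Implicit.

Lemma D_line (R : realType) (V : normedModType R) (f : V -> R) (x e : V) (p : {poly R}) :
  (forall t, f (x + t *: e) = p.[t]) -> forall h, 'D_e f (x + h *: e) = p^`().[h].
Proof.
move=> H h.
have -> : 'D_e f (x + h *: e) = 'D_1 (horner p) h.
  rewrite /derive.
  suff -> : (fun h0 : R => h0^-1 *: ((f \o shift (x + h *: e)) (h0 *: e) - f (x + h *: e)))
     = (fun h0 : R => h0^-1 *: ((horner p \o shift h) (h0 *: 1) - horner p h)) by [].
  apply/funext => s /=.
  rewrite addrA -[_ + h *: e]addrC addrA -scalerDl addrC H H.

  by rewrite scaler1 [s + h]addrC.

exact: derive_val.
Qed.

Lemma hess_line (R : realType) (V : normedModType R) (f : V -> R) (x e : V) (p : {poly R}) :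
  (forall t, f (x + t *: e) = p.[t]) -> hess_form f x e = p^`()^`().[0].
Proof.
move=> H; rewrite /hess_form.
have := @D_line R V ('D_e f) x e p^`() (@D_line R V f x e p H) 0.
by rewrite scale0r addr0.
Qed.


Lemma near_line (R : realType) (V : normedModType R) (P : V -> Prop) (x e : V) :
  (\forall y \near x, P y) -> exists2 dl : R, 0 < dl & forall t : R, `|t| < dl -> P (x + t *: e).
Proof.
move=> HP.
have c : (fun t : R => x + t *: e) @ 0 --> x.
  rewrite -[X in _ --> X]addr0 -[X in _ --> _ + X](scale0r e).
  apply: cvgD; first exact: cvg_cst.
  apply: cvgZ; [exact: cvg_id | exact: cvg_cst].
have := c _ HP.
move=> /= /nbhs_ballP [dl dl0 Hb]; exists dl => // t tl.
apply: Hb; rewrite /ball /= sub0r normrN //.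
Qed.


Lemma L1 (R : realFieldType) (a K dl : R) : 0 < dl -> 0 <= K ->
  (forall s, 0 < s -> s < dl -> s <= 1 -> 0 <= a + K * s) -> 0 <= a.
Proof.
move=> dl0 K0 H; rewrite leNgt; apply/negP => a0.
pose s := Num.min (dl / 2) (Num.min 1 (- a / (K + 1))).
have s1 : s <= dl / 2 by rewrite /s ge_min lexx.
have s2 : s <= 1 by rewrite /s !ge_min lexx orbT.
have s3 : s <= - a / (K + 1) by rewrite /s !ge_min lexx !orbT.
have s0 : 0 < s.
  rewrite /s !lt_min ltr01 /= divr_gt0 //= divr_gt0 //; lra.
have s4 : s * (K + 1) <= - a by rewrite -ler_pdivlMr //; lra.
have := H s s0 ltac:(lra) s2.
nra.
Qed.

Lemma quart (R : realFieldType) (c1 c2 c3 c4 dl : R) : 0 < dl ->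
  (forall t, `|t| < dl -> 0 <= c1 * t + c2 * t ^+ 2 + c3 * t ^+ 3 + c4 * t ^+ 4) ->
  c1 = 0 /\ 0 <= c2.
Proof.
move=> dl0 H.
have a2 := ler_norm c2; have b2 := ler_normr c2. 
have a3 := ler_norm c3; have a4 := ler_norm c4.
have b3 : - `|c3| <= c3 by rewrite lerNl -normrN ler_norm.
have b4 : - `|c4| <= c4 by rewrite lerNl -normrN ler_norm.
have n2 := normr_ge0 c2; have n3 := normr_ge0 c3; have n4 := normr_ge0 c4.
have pos : forall s, 0 < s -> s < dl -> `|s| < dl /\ `|- s| < dl.
  by move=> s s0 sd; rewrite normrN gtr0_norm.
have e1 : 0 <= c1.
  apply: (@L1 _ c1 (`|c2| + `|c3| + `|c4|) dl) => //; try lra.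
  move=> s s0 sd s1; have [p1 _] := pos s s0 sd.
  have := H s p1.
  have -> : c1 * s + c2 * s ^+ 2 + c3 * s ^+ 3 + c4 * s ^+ 4 =
     s * (c1 + c2 * s + c3 * s ^+ 2 + c4 * s ^+ 3) by ring.
  rewrite pmulr_rge0 // => h.
  have q2 : s ^+ 2 <= s by rewrite expr2 ler_piMr //; lra.
  have q3 : s ^+ 3 <= s ^+ 2 by rewrite exprS ler_piMl // exprn_ge0 //; lra.
  have q2' : 0 <= s ^+ 2 by rewrite exprn_ge0 //; lra.
  have q3' : 0 <= s ^+ 3 by rewrite exprn_ge0 //; lra.
  nra.
have e2 : 0 <= - c1.
  apply: (@L1 _ (- c1) (`|c2| + `|c3| + `|c4|) dl) => //; try lra.
  move=> s s0 sd s1; have [_ p1] := pos s s0 sd.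
  have := H (- s) p1.
  have -> : c1 * - s + c2 * (- s) ^+ 2 + c3 * (- s) ^+ 3 + c4 * (- s) ^+ 4 =
     s * (- c1 + c2 * s - c3 * s ^+ 2 + c4 * s ^+ 3) by ring.
  rewrite pmulr_rge0 // => h.
  have q2 : s ^+ 2 <= s by rewrite expr2 ler_piMr //; lra.
  have q3 : s ^+ 3 <= s ^+ 2 by rewrite exprS ler_piMl // exprn_ge0 //; lra.
  have q2' : 0 <= s ^+ 2 by rewrite exprn_ge0 //; lra.
  have q3' : 0 <= s ^+ 3 by rewrite exprn_ge0 //; lra.
  nra.
have c10 : c1 = 0 by lra.
split => //.
apply: (@L1 _ c2 (`|c3| + `|c4|) dl) => //; try lra.
move=> s s0 sd s1; have [p1 _] := pos s s0 sd.
have := H s p1.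
have -> : c1 * s + c2 * s ^+ 2 + c3 * s ^+ 3 + c4 * s ^+ 4 =
   s ^+ 2 * (c2 + c3 * s + c4 * s ^+ 2) by rewrite c10; ring.
rewrite pmulr_rge0 ?exprn_gt0 // => h.
have q2 : s ^+ 2 <= s by rewrite expr2 ler_piMr //; lra.
have q2' : 0 <= s ^+ 2 by rewrite exprn_ge0 //; lra.
nra.
Qed.


Definition q4 (R : ringType) (c0 c1 c2 c3 c4 : R) : {poly R} :=
  c0%:P + c1 *: 'X + c2 *: 'X^2 + c3 *: 'X^3 + c4 *: 'X^4.
Lemma q4E (R : comRingType) (c0 c1 c2 c3 c4 t : R) :
  (q4 c0 c1 c2 c3 c4).[t] = c0 + c1 * t + c2 * t ^+ 2 + c3 * t ^+ 3 + c4 * t ^+ 4.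
Proof. by rewrite /q4 !hornerE. Qed.
Lemma q4d1 (R : comRingType) (c0 c1 c2 c3 c4 : R) :
  (q4 c0 c1 c2 c3 c4)^`().[0] = c1.
Proof. by rewrite horner_coef0 coef_deriv /q4 !coefE /= !mulr0 !addr0 add0r mulr1. Qed.
Lemma q4d2 (R : comRingType) (c0 c1 c2 c3 c4 : R) :
  (q4 c0 c1 c2 c3 c4)^`()^`().[0] = 2 * c2.
Proof. by rewrite horner_coef0 !coef_deriv /q4 !coefE /= !mulr0 !addr0 !add0r mulr1 mulr_natl. Qed.


Section Frob.
Lemma frobDr (R : realType) d (A B C : 'M[R]_d) : frob A (B + C) = frob A B + frob A C.
Proof. by rewrite /frob mulmxDr mxtraceD. Qed.
Lemma frobZr (R : realType) d (A B : 'M[R]_d) c : frob A (c *: B) = c * frob A B.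
Proof. by rewrite /frob -scalemxAr mxtraceZ. Qed.
Lemma frobNr (R : realType) d (A B : 'M[R]_d) : frob A (- B) = - frob A B.
Proof. by rewrite -scaleN1r frobZr mulN1r. Qed.
Lemma frobBr (R : realType) d (A B C : 'M[R]_d) : frob A (B - C) = frob A B - frob A C.
Proof. by rewrite frobDr frobNr. Qed.
Lemma frob0r (R : realType) d (A : 'M[R]_d) : frob A 0 = 0.
Proof. by rewrite /frob mulmx0 mxtrace0. Qed.
Lemma frob_sym (R : realType) d (A B : 'M[R]_d) : frob A B = frob B A.
Proof. by rewrite /frob -mxtrace_tr trmx_mul trmxK. Qed.
Lemma frobDl (R : realType) d (A B C : 'M[R]_d) : frob (B + C) A = frob B A + frob C A.
Proof. by rewrite !(frob_sym _ A) frobDr. Qed.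
Lemma frobZl (R : realType) d (A B : 'M[R]_d) c : frob (c *: B) A = c * frob B A.
Proof. by rewrite !(frob_sym _ A) frobZr. Qed.
Lemma frobNl (R : realType) d (A B : 'M[R]_d) : frob (- B) A = - frob B A.
Proof. by rewrite !(frob_sym _ A) frobNr. Qed.
Lemma frob_suml (R : realType) d n (F : 'I_n -> 'M[R]_d) D :
  frob (\sum_k F k) D = \sum_k frob (F k) D.
Proof.
elim/big_rec2: _ => [|k x s _ IH]; first by rewrite frob_sym frob0r.
by rewrite frobDl IH.
Qed.
Lemma frob_mul (R : realType) d (G A U : 'M[R]_d) : frob G (A *m U^T) = frob (G *m U) A.
Proof. by rewrite /frob mulmxA mxtrace_mulC mulmxA trmx_mul. Qed.
Lemma frob_trr (R : realType) d (G M : 'M[R]_d) : frob G M^T = frob G^T M.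
Proof. by rewrite /frob -trmx_mul mxtrace_tr mxtrace_mulC trmxK. Qed.
Lemma tr_mulT (R : realType) d (A U : 'M[R]_d) : \tr (A *m U^T) = frob U A.
Proof. by rewrite /frob mxtrace_mulC. Qed.
Lemma Pmat_sym (R : realType) d (ij : 'I_d * 'I_d) : (Pmat ij : 'M[R]_d)^T = Pmat ij.
Proof. by rewrite /Pmat linearZ /= linearD /= !trmx_delta addrC. Qed.
End Frob.

Lemma mm_line (R : realType) d (U A : 'M[R]_d) t :
  (U + t *: A) *m (U + t *: A)^T =
  U *m U^T + t *: (A *m U^T + U *m A^T) + t ^+ 2 *: (A *m A^T).
Proof.
rewrite linearD linearZ /= mulmxDl !mulmxDr -!scalemxAl -!scalemxAr scalerA scalerDr expr2.
rewrite !addrA; congr (_ + _); rewrite -!addrA; congr (_ + _); exact: addrC.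
Qed.


Definition rr (R : realType) d n (idx : 'I_n -> 'I_d * 'I_d) (y : 'I_n -> R) (U V : 'M[R]_d) k :=
  frob (Pmat (idx k)) (U *m U^T - V *m V^T) - y k.
Definition D1 (R : realType) d (U V A B : 'M[R]_d) :=
  (A *m U^T + U *m A^T) - (B *m V^T + V *m B^T).
Definition D2 (R : realType) d (A B : 'M[R]_d) := A *m A^T - B *m B^T.
Definition coef1 (R : realType) d n (idx : 'I_n -> 'I_d * 'I_d) (y : 'I_n -> R) (lambda : R) (U V A B : 'M[R]_d) :=
  n%:R^-1 * (\sum_k (2 * rr idx y U V k * frob (Pmat (idx k)) (D1 U V A B)))
  + lambda / 2 * \tr (A *m U^T + U *m A^T + (B *m V^T + V *m B^T)).
Definition coef2 (R : realType) d n (idx : 'I_n -> 'I_d * 'I_d) (y : 'I_n -> R) (lambda : R) (U V A B : 'M[R]_d) :=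
  n%:R^-1 * (\sum_k (frob (Pmat (idx k)) (D1 U V A B) ^+ 2
                     + 2 * rr idx y U V k * frob (Pmat (idx k)) (D2 A B)))
  + lambda / 2 * \tr (A *m A^T + B *m B^T).
Definition coef3 (R : realType) d n (idx : 'I_n -> 'I_d * 'I_d) (U V A B : 'M[R]_d) :=
  n%:R^-1 * (\sum_k (2 * frob (Pmat (idx k)) (D1 U V A B) * frob (Pmat (idx k)) (D2 A B))).
Definition coef4 (R : realType) d n (idx : 'I_n -> 'I_d * 'I_d) (A B : 'M[R]_d) :=
  n%:R^-1 * (\sum_k (frob (Pmat (idx k)) (D2 A B) ^+ 2)).

Lemma loss_line (R : realType) d n (idx : 'I_n -> 'I_d * 'I_d) (y : 'I_n -> R) (lambda : R) (U V A B : 'M[R]_d) t :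
  lossL idx y lambda ((U, V) + t *: (A, B)) =
  lossL idx y lambda (U, V) + coef1 idx y lambda U V A B * t + coef2 idx y lambda U V A B * t ^+ 2
  + coef3 idx U V A B * t ^+ 3 + coef4 idx A B * t ^+ 4.
Proof.
rewrite /lossL /= !mm_line /coef1 /coef2 /coef3 /coef4.
set S := \sum_(k < n) _ ^+ 2.
have -> : S = \sum_k (rr idx y U V k ^+ 2) 
   + t * \sum_k (2 * rr idx y U V k * frob (Pmat (idx k)) (D1 U V A B))
   + t ^+ 2 * \sum_k (frob (Pmat (idx k)) (D1 U V A B) ^+ 2
                     + 2 * rr idx y U V k * frob (Pmat (idx k)) (D2 A B))
   + t ^+ 3 * \sum_k (2 * frob (Pmat (idx k)) (D1 U V A B) * frob (Pmat (idx k)) (D2 A B))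
   + t ^+ 4 * \sum_k (frob (Pmat (idx k)) (D2 A B) ^+ 2).
  rewrite !mulr_sumr -!big_split /=; apply: eq_bigr => k _.
  rewrite /rr /D1 /D2 !(frobDr, frobNr, frobZr).
  ring.
rewrite !(mxtraceD, mxtraceZ).
ring.
Qed.


Definition Gm (R : realType) d n (idx : 'I_n -> 'I_d * 'I_d) (y : 'I_n -> R) (U V : 'M[R]_d) : 'M[R]_d :=
  n%:R^-1 *: \sum_k (2 * rr idx y U V k) *: Pmat (idx k).

Lemma frobG (R : realType) d n (idx : 'I_n -> 'I_d * 'I_d) (y : 'I_n -> R) (U V D : 'M[R]_d) :
  frob (Gm idx y U V) D = n%:R^-1 * \sum_k (2 * rr idx y U V k * frob (Pmat (idx k)) D).
Proof.
rewrite /Gm frobZl frob_suml; congr (_ * _); apply: eq_bigr => k _.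
by rewrite frobZl.
Qed.

Lemma Gm_sym (R : realType) d n (idx : 'I_n -> 'I_d * 'I_d) (y : 'I_n -> R) (U V : 'M[R]_d) :
  (Gm idx y U V)^T = Gm idx y U V.
Proof.
rewrite /Gm linearZ /= linear_sum /=; congr (_ *: _); apply: eq_bigr => k _.
by rewrite linearZ /= Pmat_sym.
Qed.

Lemma frob_self_eq0 (R : realType) d (W : 'M[R]_d) : frob W W = 0 -> W = 0.
Proof.
rewrite /frob /mxtrace => H.
have H' : forall i, \sum_j W j i ^+ 2 = 0.
  move=> i; move/eqP: H; rewrite psumr_eq0 => [/allP H1|i0 _].
    have := H1 i (mem_index_enum i); rewrite implyTb => /eqP H2.
    rewrite -[RHS]H2 mxE; apply: eq_bigr => j _; rewrite mxE expr2 //.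
  by rewrite mxE sumr_ge0 // => j _; rewrite mxE -expr2 sqr_ge0.
apply/matrixP => j i; rewrite mxE.
move/eqP: (H' i); rewrite psumr_eq0 => [/allP H1|j0 _]; last exact: sqr_ge0.
have := H1 j (mem_index_enum j); rewrite implyTb sqrf_eq0 => /eqP //.
Qed.

Definition Mp (R : realType) d n (idx : 'I_n -> 'I_d * 'I_d) (y : 'I_n -> R) (lambda : R) (U V : 'M[R]_d) : 'M[R]_d :=
  2 *: Gm idx y U V + lambda%:M.
Definition Mn (R : realType) d n (idx : 'I_n -> 'I_d * 'I_d) (y : 'I_n -> R) (lambda : R) (U V : 'M[R]_d) : 'M[R]_d :=
  lambda%:M - 2 *: Gm idx y U V.

Lemma frobG_UAT (R : realType) d (G U A : 'M[R]_d) : G^T = G ->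
  frob G (U *m A^T) = frob (G *m U) A.
Proof.
move=> Gs; rewrite -[U in U *m _]trmxK -trmx_mul frob_trr Gs frob_mul //.
Qed.
Lemma frobG_swap (R : realType) d (G : 'M[R]_d) : G^T = G ->
  forall A U, frob (G *m A) U = frob (G *m U) A.
Proof.
move=> Gs A U; rewrite frob_sym /frob trmx_mul Gs mulmxA //.
Qed.
Lemma tr_UAT (R : realType) d (U A : 'M[R]_d) : \tr (U *m A^T) = frob U A.
Proof. by rewrite -[U in U *m _]trmxK -trmx_mul mxtrace_tr tr_mulT. Qed.

Lemma frob_Mp (R : realType) d (G M W : 'M[R]_d) lambda :
  frob ((2 *: G + lambda%:M) *m M) W = 2 * frob (G *m M) W + lambda * frob M W.
Proof. by rewrite mulmxDl -scalemxAl mul_scalar_mx !frobDl !frobZl. Qed.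
Lemma frob_Mn (R : realType) d (G M W : 'M[R]_d) lambda :
  frob ((lambda%:M - 2 *: G) *m M) W = lambda * frob M W - 2 * frob (G *m M) W.
Proof. by rewrite mulmxBl -scalemxAl mul_scalar_mx !(frobDl, frobNl, frobZl). Qed.

Lemma coef1E (R : realType) d n (idx : 'I_n -> 'I_d * 'I_d) (y : 'I_n -> R) (lambda : R) (U V A B : 'M[R]_d) :
  coef1 idx y lambda U V A B = frob (Mp idx y lambda U V *m U) A + frob (Mn idx y lambda U V *m V) B.
Proof.
rewrite /coef1 -frobG /D1 /Mp /Mn frob_Mp frob_Mn.
have Gs := Gm_sym idx y U V.
rewrite !(frobDr, frobNr) !frobG_UAT // (frobG_swap Gs A U) (frobG_swap Gs B V) !(mxtraceD, tr_UAT, tr_mulT).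
rewrite (frob_sym A U) (frob_sym B V); by field.
Qed.

Lemma coef2E (R : realType) d n (idx : 'I_n -> 'I_d * 'I_d) (y : 'I_n -> R) (lambda : R) (U V A B : 'M[R]_d) :
  coef2 idx y lambda U V A B = n%:R^-1 * (\sum_k frob (Pmat (idx k)) (D1 U V A B) ^+ 2)
    + (frob A (Mp idx y lambda U V *m A) + frob B (Mn idx y lambda U V *m B)) / 2.
Proof.
rewrite /coef2 big_split /= mulrDr -frobG /D2 /Mp /Mn.
rewrite !(frob_sym A) !(frob_sym B) frob_Mp frob_Mn.
rewrite !(frobDr, frobNr) !frob_mul !(mxtraceD, tr_mulT).
set c := n%:R^-1; by field.
Qed.

Lemma trTT_ge0 (R : realType) m p (X : 'M[R]_(m, p)) : 0 <= \tr (X^T *m X).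
Proof.
rewrite /mxtrace sumr_ge0 // => i _; rewrite mxE sumr_ge0 // => j _.
by rewrite mxE -expr2 sqr_ge0.
Qed.

Lemma trTT_eq0 (R : realType) m p (X : 'M[R]_(m, p)) : \tr (X^T *m X) = 0 -> X = 0.
Proof.
rewrite /mxtrace => H.
have H' : forall i, \sum_j X j i ^+ 2 = 0.
  move=> i; move/eqP: H; rewrite psumr_eq0 => [/allP H1|i0 _].
    have := H1 i (mem_index_enum i); rewrite implyTb => /eqP H2.
    rewrite -[RHS]H2 mxE; apply: eq_bigr => j _; rewrite mxE expr2 //.
  by rewrite mxE sumr_ge0 // => j _; rewrite mxE -expr2 sqr_ge0.
apply/matrixP => j i; rewrite mxE.
move/eqP: (H' i); rewrite psumr_eq0 => [/allP H1|j0 _]; last exact: sqr_ge0.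
have := H1 j (mem_index_enum j); rewrite implyTb sqrf_eq0 => /eqP //.
Qed.

Lemma frob_cols (R : realType) d (M W : 'M[R]_d) :
  frob W (M *m W) = \sum_j ((col j W)^T *m (M *m col j W)) 0 0.
Proof.
rewrite /frob /mxtrace; apply: eq_bigr => j _.
rewrite !mxE; apply: eq_bigr => k _; rewrite !mxE; congr (_ * _).
by apply: eq_bigr => l _; rewrite !mxE.
Qed.

Lemma psd_of (R : realType) d (M U : 'M[R]_d) : M *m U = 0 ->
  (forall A, A *m U^T = 0 -> 0 <= frob A (M *m A)) -> forall W, 0 <= frob W (M *m W).
Proof.
move=> MU H W.
case: (boolP (U \in unitmx)) => Uu.
  have -> : M = 0 by rewrite -(mulmxK Uu M) MU mul0mx.
  by rewrite mul0mx frob0r.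
have : \det U^T == 0 by rewrite det_tr; move: Uu; rewrite unitmxE unitfE negbK.
case/det0P => v v0 vU.
have tpos : 0 < \tr (v^T *m v).
  rewrite lt_def trTT_ge0 andbT; apply/eqP => /trTT_eq0 v00.
  by move: v0; rewrite v00 eqxx.
have key : forall w : 'cV[R]_d, 0 <= (w^T *m (M *m w)) 0 0.
  move=> w; have h1 : (w *m v) *m U^T = 0 by rewrite -mulmxA vU mulmx0.
  have := H _ h1; rewrite /frob trmx_mul -!mulmxA.
  have -> : v^T *m (w^T *m (M *m (w *m v))) = (w^T *m (M *m w)) 0 0 *: (v^T *m v).
    rewrite (mulmxA M) (mulmxA w^T) {1}[w^T *m (M *m w)]mx11_scalar mul_scalar_mx.
    by rewrite scalemxAr.
  by rewrite mxtraceZ pmulr_lge0.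
by rewrite frob_cols sumr_ge0 // => j _; apply: key.
Qed.

Lemma glob_of (R : realType) d n (idx : 'I_n -> 'I_d * 'I_d) (y : 'I_n -> R) (lambda : R) (U V : 'M[R]_d) :
  Mp idx y lambda U V *m U = 0 -> Mn idx y lambda U V *m V = 0 ->
  (forall W, 0 <= frob W (Mp idx y lambda U V *m W)) ->
  (forall W, 0 <= frob W (Mn idx y lambda U V *m W)) ->
  global_min (lossL idx y lambda) (U, V).
Proof.
move=> h1 h2 p1 p2 [U' V'].
have Gs := Gm_sym idx y U V.
set G := Gm idx y U V.
have ineq : n%:R^-1 * \sum_k rr idx y U V k ^+ 2 + frob G ((U' *m U'^T - V' *m V'^T) - (U *m U^T - V *m V^T))
    <= n%:R^-1 * \sum_k (frob (Pmat (idx k)) (U' *m U'^T - V' *m V'^T) - y k) ^+ 2.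
  rewrite /G frobG -mulrDr -big_split /=; apply: ler_wpM2l; first by rewrite invr_ge0 ler0n.
  apply: ler_sum => k _; rewrite frobBr /rr.
  set a := frob _ (U' *m U'^T - V' *m V'^T); set b := frob _ (U *m U^T - V *m V^T).
  rewrite -subr_ge0; have -> : (a - y k) ^+ 2 - ((b - y k) ^+ 2 + 2 * (b - y k) * (a - b)) = (a - b) ^+ 2 by ring.
  exact: sqr_ge0.
have q1 := p1 U'; have q2 := p2 V'.
have f1 : frob U (Mp idx y lambda U V *m U) = 0 by rewrite frob_sym h1 frob_sym frob0r.
have f2 : frob V (Mn idx y lambda U V *m V) = 0 by rewrite frob_sym h2 frob_sym frob0r.
move: q1 q2 f1 f2 ineq.
rewrite /Mp /Mn !(frob_sym U') !(frob_sym V') !(frob_sym U) !(frob_sym V) !frob_Mp !frob_Mn -/G.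
rewrite !(frobDr, frobNr) !frob_mul.
rewrite /lossL /= !(mxtraceD, tr_mulT).
rewrite /rr.
move=> *; lra.
Qed.

Lemma core (R : realType) d n (idx : 'I_n -> 'I_d * 'I_d) (y : 'I_n -> R) (lambda : R) (U V : 'M[R]_d) :
  (forall A B, coef1 idx y lambda U V A B = 0) ->
  (forall A B, 0 <= coef2 idx y lambda U V A B) ->
  global_min (lossL idx y lambda) (U, V).
Proof.
move=> H1 H2.
have e1 : Mp idx y lambda U V *m U = 0.
  apply: frob_self_eq0; have := H1 (Mp idx y lambda U V *m U) 0.
  by rewrite coef1E frob0r addr0.
have e2 : Mn idx y lambda U V *m V = 0.
  apply: frob_self_eq0; have := H1 0 (Mn idx y lambda U V *m V).
  by rewrite coef1E frob0r add0r.
apply: glob_of => //.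
- apply: (psd_of e1) => A hA; have := H2 A 0.
  rewrite coef2E.
  have -> : D1 U V A 0 = 0.
    by rewrite /D1 hA -[U in U *m A^T]trmxK -trmx_mul hA trmx0 mul0mx mulmx0 !addr0 subrr.
  rewrite big1 ?mulr0 ?add0r => [|k _]; last by rewrite frob0r expr0n.
  rewrite mulmx0 frob0r addr0 => h; rewrite -(pmulr_lge0 _ (_ : 0 < 2^-1)) //.
- apply: (psd_of e2) => B hB; have := H2 0 B.
  rewrite coef2E.
  have -> : D1 U V 0 B = 0.
    by rewrite /D1 hB -[V in V *m B^T]trmxK -trmx_mul hB trmx0 mul0mx mulmx0 !addr0 subrr.
  rewrite big1 ?mulr0 ?add0r => [|k _]; last by rewrite frob0r expr0n.
  rewrite mulmx0 frob0r add0r => h; rewrite -(pmulr_lge0 _ (_ : 0 < 2^-1)) //.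
Qed.

Theorem theoremF1 (R : realType) (d n : nat) (lambda : R) (hlambda : 0 < lambda)
  (idx : 'I_n -> 'I_d * 'I_d) (y : 'I_n -> R) :
  (forall UV : 'M[R]_d * 'M[R]_d,
     local_min (lossL idx y lambda) UV -> global_min (lossL idx y lambda) UV) /\
  (forall UV : 'M[R]_d * 'M[R]_d,
     saddle (lossL idx y lambda) UV ->
     exists E : 'M[R]_d * 'M[R]_d, hess_form (lossL idx y lambda) UV E < 0).
Proof.
split.
- move=> [U V] Hmin; apply: core => A B.
  + have [dl dl0 Hdl] := @near_line _ _ _ (U, V) (A, B) Hmin.
    have [] := @quart _ (coef1 idx y lambda U V A B) (coef2 idx y lambda U V A B)
      (coef3 idx U V A B) (coef4 idx A B) dl dl0; last by [].
    move=> t /Hdl; rewrite loss_line => h; lra.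
  + have [dl dl0 Hdl] := @near_line _ _ _ (U, V) (A, B) Hmin.
    have [] := @quart _ (coef1 idx y lambda U V A B) (coef2 idx y lambda U V A B)
      (coef3 idx U V A B) (coef4 idx A B) dl dl0; last by [].
    move=> t /Hdl; rewrite loss_line => h; lra.
- move=> [U V] [[Hd Hd0] [nmin nmax]].
  case: (pselect (exists E, hess_form (lossL idx y lambda) (U, V) E < 0)) => // nE.
  exfalso; apply: nmin.
  have G : global_min (lossL idx y lambda) (U, V).
    apply: core => A B.
    + pose p := q4 (lossL idx y lambda (U, V)) (coef1 idx y lambda U V A B) (coef2 idx y lambda U V A B)
        (coef3 idx U V A B) (coef4 idx A B).
      have Hp : forall t, lossL idx y lambda ((U, V) + t *: (A, B)) = p.[t].
        by move=> t; rewrite q4E loss_line.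
      have := @D_line _ _ _ _ _ _ Hp 0; rewrite scale0r addr0 q4d1 => <-.
      by rewrite deriveE // Hd0.
    + pose p := q4 (lossL idx y lambda (U, V)) (coef1 idx y lambda U V A B) (coef2 idx y lambda U V A B)
        (coef3 idx U V A B) (coef4 idx A B).
      have Hp : forall t, lossL idx y lambda ((U, V) + t *: (A, B)) = p.[t].
        by move=> t; rewrite q4E loss_line.
      have := @hess_line _ _ _ _ _ _ Hp; rewrite q4d2 => hE.
      have : 0 <= 2 * coef2 idx y lambda U V A B.
        rewrite -hE leNgt; apply/negP => h; apply: nE; by exists (A, B).
      by rewrite pmulr_rge0.
  by apply: filterE => z; apply: G.
Qed.
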